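(* Let $S=S_1+S_2$ be the gluing of affine semigroups $S_1,S_2\subset\mathbb N^r$ along $\alpha$. Fix $j\in\{1,2\}$ and $b,b'\in S_j$. Then $b-b'\in S_j$ if and only if $b-b'\in S$.
   Context: $S=S_1+S_2$ is the gluing of $S_1$ and $S_2$ if there is $\alpha\in S_1\cap S_2$ with $\mathbb Z S_1\cap\mathbb Z S_2=\mathbb Z\alpha$, where $\mathbb Z S_j$ is the subgroup of $\mathbb Z^r$ generated by $S_j$. *)

(* Defs.v *)
From HB Require Import structures.
From mathcomp Require Import all_boot all_order all_algebra.
Set Implicit Arguments. Unset Strict Implicit. Unset Printing Implicit Defensive.
Import Order.TTheory GRing.Theory Num.Theory.
Local Open Scope ring_scope.

Definition natvec (r : nat) (v : 'rV[int]_r) : Prop := forall i, 0 <= v ord0 i.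

Definition gen_monoid (r : nat) (A : seq 'rV[int]_r) (x : 'rV[int]_r) : Prop :=
  exists c : 'I_(size A) -> nat, x = \sum_(i < size A) A`_i *+ c i.

Definition affine_semigroup (r : nat) (S : 'rV[int]_r -> Prop) : Prop :=
  exists A : seq 'rV[int]_r, (forall a, a \in A -> natvec a) /\
    (forall x, S x <-> gen_monoid A x).

Definition zgroup (r : nat) (S : 'rV[int]_r -> Prop) (x : 'rV[int]_r) : Prop :=
  exists (s : seq 'rV[int]_r) (c : 'I_(size s) -> int),
    (forall y, y \in s -> S y) /\ x = \sum_(i < size s) s`_i *~ c i.

Definition msum (r : nat) (S1 S2 : 'rV[int]_r -> Prop) (x : 'rV[int]_r) : Prop :=
  exists s1 s2, S1 s1 /\ S2 s2 /\ x = s1 + s2.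

Definition gluing (r : nat) (S S1 S2 : 'rV[int]_r -> Prop) (alpha : 'rV[int]_r) : Prop :=
  (forall x, S x <-> msum S1 S2 x) /\ S1 alpha /\ S2 alpha /\
  (forall x, (zgroup S1 x /\ zgroup S2 x) <-> exists k : int, x = alpha *~ k).

(* S_j for j in {1,2}, indexed by 'I_2 (ord0 <-> 1, ord1 <-> 2) *)
Definition pick2 (r : nat) (j : 'I_2) (S1 S2 : 'rV[int]_r -> Prop) : 'rV[int]_r -> Prop :=
  if val j == 0%N then S1 else S2.

(* Main.v *)
Require Import Defs.
From HB Require Import structures.
From mathcomp Require Import all_boot all_order all_algebra.
Import Order.TTheory GRing.Theory Num.Theory.
Local Open Scope ring_scope.

Section H.
Variables (r : nat) (S : 'rV[int]_r -> Prop).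
Hypothesis hS : affine_semigroup S.

Lemma as0 : S 0.
Proof.
case: hS => A [_ hA]; apply/hA; exists (fun _ => 0%N).
by rewrite big1 // => i _; rewrite mulr0n.
Qed.

Lemma asD x y : S x -> S y -> S (x + y).
Proof.
case: hS => A [_ hA] /hA [c1 ->] /hA [c2 ->]; apply/hA.
exists (fun i => (c1 i + c2 i)%N).
by rewrite -big_split; apply: eq_bigr => i _; rewrite mulrnDr.
Qed.

Lemma asMn x n : S x -> S (x *+ n).
Proof.
move=> Sx; elim: n => [|n IH]; first by rewrite mulr0n; exact: as0.
by rewrite mulrS; apply: asD.
Qed.

Lemma asnat x : S x -> natvec x.
Proof.
case: hS => A [hN hA] /hA [c ->] i.
rewrite summxE; apply: sumr_ge0 => k _; rewrite mulmxnE; apply: mulrn_wge0.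
case: (ltnP k (size A)) => hk.
  by apply: hN; apply: mem_nth.
by rewrite nth_default // mxE.
Qed.

Lemma zg_in x : S x -> zgroup S x.
Proof.
move=> Sx; exists [:: x], (fun _ => 1).
split; first by move=> y; rewrite inE => /eqP ->.
by rewrite big_ord1 /= mulr1z.
Qed.

Lemma zg3 x y z : S x -> S y -> S z -> zgroup S (x - y - z).
Proof.
move=> Sx Sy Sz; exists [:: x; y; z], (fun i => nth 0 [:: 1; -1; -1] i).
split; first by move=> w; rewrite !inE => /or3P [] /eqP ->.
rewrite !big_ord_recl big_ord0 /= addr0.
by rewrite mulr1z !mulrN1z addrA.
Qed.
End H.
Arguments as0 {r S}. Arguments asD {r S} hS {x y}. Arguments asMn {r S} hS {x}. Arguments asnat {r S} hS {x}. Arguments zg_in {r S x}. Arguments zg3 {r S x y z}.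

Lemma alpha_case r (S1 : 'rV[int]_r -> Prop) (hS1 : affine_semigroup S1)
  (alpha s : 'rV[int]_r) (k : int) :
  S1 alpha -> natvec s -> s = alpha *~ k -> S1 s.
Proof.
move=> Sa Ns E; rewrite E in Ns *; clear E; case: k Ns => n Ns.
  by rewrite -pmulrn; apply: asMn.
have -> : alpha *~ Negz n = 0.
  apply/matrixP => i j; rewrite (ord1 i).
  have h1 := Ns j; have h2 := asnat hS1 Sa j.
  move: h1; rewrite NegzE mulrNz -pmulrn !mxE mulmxnE => h1.
  apply/eqP; rewrite eq_le h1 andbT oppr_le0 mulrn_wge0 //.
exact: (as0 hS1).
Qed.

Theorem lemma3p5 (r : nat) (S S1 S2 : 'rV[int]_r -> Prop) (alpha : 'rV[int]_r)
  (hS1 : affine_semigroup S1) (hS2 : affine_semigroup S2)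
  (hglue : gluing S S1 S2 alpha)
  (j : 'I_2) (b b' : 'rV[int]_r) :
  pick2 j S1 S2 b -> pick2 j S1 S2 b' ->
  (pick2 j S1 S2 (b - b') <-> S (b - b')).
Proof.
case: hglue => hS [Sa1 [Sa2 hZ]].
rewrite /pick2; case: (val j == 0%N) => Sb Sb'; split.
- move=> H; apply/hS; exists (b - b'), 0; split=> //; split; last by rewrite addr0.
  exact: (as0 hS2).
- case/hS => s1 [s2 [Ss1 [Ss2 E]]].
  have e2 : s2 = b - b' - s1 by rewrite E addrAC subrr add0r.
  have [k hk] : exists k : int, s2 = alpha *~ k.
    apply/hZ; split; last exact: zg_in.
    by rewrite e2; apply: zg3.
  rewrite E; apply: (asD hS1) => //.
  exact: (@alpha_case _ _ hS1 _ _ _ Sa1 (asnat hS2 Ss2) hk).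
- move=> H; apply/hS; exists 0, (b - b'); split; first exact: (as0 hS1).
  by split=> //; rewrite add0r.
- case/hS => s1 [s2 [Ss1 [Ss2 E]]].
  have e1 : s1 = b - b' - s2 by rewrite E addrK.
  have [k hk] : exists k : int, s1 = alpha *~ k.
    apply/hZ; split; first exact: zg_in.
    by rewrite e1; apply: zg3.
  rewrite E; apply: (asD hS2) => //.
  exact: (@alpha_case _ _ hS2 _ _ _ Sa2 (asnat hS1 Ss1) hk).
Qed.
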